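(* Let $\phi=(\phi_g,A_g,A)_{g\in G}$ be a partial action of a group $G$ on a ring $A$ and let $A\rtimes_\phi G$ be the partial skew group ring. Then $A\rtimes_\phi G$ is graded von Neumann regular if and only if $A_g$ is von Neumann regular for every $g\in G$.
   Context: A partial action of a group $G$ (identity $\varepsilon$) on a ring $A$ consists of ideals $A_g\subseteq A$ and ring isomorphisms $\phi_g:A_{g^{-1}}\to A_g$ such that (i) $A_\varepsilon=A$, $\phi_\varepsilon=\operatorname{id}$; (ii) $\phi_g(A_{g^{-1}}\cap A_h)=A_g\cap A_{gh}$; (iii) $\phi_g(\phi_h(x))=\phi_{gh}(x)$ for $x\in A_{h^{-1}}\cap A_{h^{-1}g^{-1}}$. The partial skew group ring $A\rtimes_\phi G$ is the set of finite formal sums $\sum_g a_g\delta_g$ with $a_g\in A_g$, with multiplication extending $(a_g\delta_g)(b_h\delta_h)=\phi_g(\phi_{g^{-1}}(a_g)b_h)\delta_{gh}$; it is $G$-graded with $(A\rtimes_\phi G)_g=A_g\delta_g$. A (not necessarily unital) ring $B$ is von Neumann regular if for every $x\in B$ there is $y\in B$ with $xyx=x$; a $G$-graded ring is graded von Neumann regular if this holds for every homogeneous $x$. *)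

(* Defs.v *)
From HB Require Import structures.
From mathcomp Require Import all_boot all_order all_algebra.
Set Implicit Arguments. Unset Strict Implicit. Unset Printing Implicit Defensive.
Import GRing.Theory.
Local Open Scope ring_scope.

Record rng := Rng {
  rng_car :> zmodType;
  rmul : rng_car -> rng_car -> rng_car;
  rmulA : forall x y z, rmul x (rmul y z) = rmul (rmul x y) z;
  rmulDl : forall x y z, rmul (x + y) z = rmul x z + rmul y z;
  rmulDr : forall x y z, rmul x (y + z) = rmul x y + rmul x z
}.

Definition is_ideal (A : rng) (I : pred A) : Prop :=
  [/\ 0 \in I,
      (forall x y, x \in I -> y \in I -> x - y \in I),
      (forall a x, x \in I -> rmul a x \in I) &
      (forall a x, x \in I -> rmul x a \in I)].

(* Partial action (phi_g, A_g) of a group G on A: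
   dom g = A_g, act g = phi_g : A_{g^-1} -> A_g (given as a total function,
   only its restriction to A_{g^-1} matters). *)
Record is_partial_action (G : groupType) (A : rng)
    (dom : G -> pred A) (act : G -> A -> A) : Prop := {
  pa_ideal : forall g, is_ideal (dom g);
  pa_maps : forall g x, x \in dom (g^-1)%g -> act g x \in dom g;
  pa_add : forall g x y, x \in dom (g^-1)%g -> y \in dom (g^-1)%g ->
      act g (x + y) = act g x + act g y;
  pa_mul : forall g x y, x \in dom (g^-1)%g -> y \in dom (g^-1)%g ->
      act g (rmul x y) = rmul (act g x) (act g y);
  pa_inj : forall g x y, x \in dom (g^-1)%g -> y \in dom (g^-1)%g ->
      act g x = act g y -> x = y;
  pa_surj : forall g y, y \in dom g -> exists2 x, x \in dom (g^-1)%g & act g x = y;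
  pa_dom1 : forall x, x \in dom 1%g;
  pa_act1 : forall x, act 1%g x = x;
  (* (ii) phi_g(A_{g^-1} \cap A_h) = A_g \cap A_{gh} *)
  pa_ii : forall g h y, (y \in dom g /\ y \in dom (g * h)%g) <->
      exists2 x, (x \in dom (g^-1)%g /\ x \in dom h) & act g x = y;
  pa_iii : forall g h x, x \in dom (h^-1)%g -> x \in dom (h^-1 * g^-1)%g ->
      act g (act h x) = act (g * h)%g x
}.

Definition vnr_ideal (A : rng) (I : pred A) : Prop :=
  forall x, x \in I -> exists2 y, y \in I & rmul (rmul x y) x = x.

(* Elements of the partial skew group ring A ⋊_phi G: finite formal sums
   sum_i a_i delta_{g_i}, represented by lists of pairs (g_i, a_i) with
   a_i \in A_{g_i}; two lists represent the same element iff they have the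
   same coefficient at every g. *)
Section Skew.
Variables (G : groupType) (A : rng) (dom : G -> pred A) (act : G -> A -> A).

Definition skew_wf (s : seq (G * A)) : Prop := all (fun p => p.2 \in dom p.1) s.

Definition skew_coef (s : seq (G * A)) (h : G) : A :=
  \sum_(p <- s | p.1 == h) p.2.

Definition skew_eq (s t : seq (G * A)) : Prop :=
  forall h, skew_coef s h = skew_coef t h.

(* bilinear extension of (a delta_g)(b delta_h) = phi_g(phi_{g^-1}(a) b) delta_{gh} *)
Definition skew_mul (s t : seq (G * A)) : seq (G * A) :=
  [seq ((p.1 * q.1)%g, act p.1 (rmul (act (p.1^-1)%g p.2) q.2)) | p <- s, q <- t].

Definition skew_hom (g : G) (a : A) : seq (G * A) := [:: (g, a)].

Definition skew_graded_vnr : Prop :=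
  forall g a, a \in dom g ->
    exists2 y, skew_wf y &
      skew_eq (skew_mul (skew_mul (skew_hom g a) y) (skew_hom g a)) (skew_hom g a).
End Skew.

(* Main.v *)
Require Import Defs.
From mathcomp Require Import all_boot all_order all_algebra.
Set Implicit Arguments. Unset Strict Implicit. Unset Printing Implicit Defensive.
Import GRing.Theory.
Local Open Scope ring_scope.

Section Aux.
Variables (G : groupType) (A : rng) (dom : G -> pred A) (act : G -> A -> A).
Hypothesis Hpa : is_partial_action dom act.

Lemma rmul0l (x : A) : rmul 0 x = 0.
Proof.
have H := rmulDl 0 0 x; rewrite addr0 in H.
by apply: (@addrI _ (rmul 0 x)); rewrite -H addr0.
Qed.

Lemma rmul0r (x : A) : rmul x 0 = 0.
Proof.
have H := rmulDr x 0 0; rewrite addr0 in H.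
by apply: (@addrI _ (rmul x 0)); rewrite -H addr0.
Qed.

Lemma ideal_add (I : pred A) x y : is_ideal I -> x \in I -> y \in I -> x + y \in I.
Proof.
case=> I0 Isub _ _ xI yI.
have := Isub x (0 - y) xI (Isub 0 y I0 yI).
by rewrite sub0r opprK.
Qed.

Lemma act_inv g x : x \in dom g -> act g (act (g^-1)%g x) = x.
Proof.
move=> xd.
have := pa_iii Hpa (g := g) (h := (g^-1)%g) (x := x).
rewrite invgK mulgV (pa_act1 Hpa) //; apply => //; exact: (pa_dom1 Hpa).
Qed.

Lemma act_inv_dom g x : x \in dom g -> act (g^-1)%g x \in dom (g^-1)%g.
Proof. by move=> xd; apply: (pa_maps Hpa); rewrite invgK. Qed.
End Aux.

Theorem mainTheorem4 (G : groupType) (A : rng) (dom : G -> pred A)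
    (act : G -> A -> A) (Hpa : is_partial_action dom act) :
  skew_graded_vnr dom act <-> (forall g : G, vnr_ideal (dom g)).
Proof.
split.
- move=> H g x xd.
  have [y ywf Heq] := H g x xd.
  have := Heq g.
  rewrite /skew_coef /skew_mul /skew_hom /= big_cons big_nil eqxx addr0.
  set F := fun q : G * A => ((g * q.1)%g, act g (rmul (act (g^-1)%g x) q.2)).
  have -> : [seq (p.1 * q.1, act p.1 (rmul (act p.1^-1 p.2) q.2))%g
       | p <- [seq (p.1 * q.1, act p.1 (rmul (act p.1^-1 p.2) q.2))%g
       | p <- [:: (g, x)], q <- y], q <- [:: (g, x)]]
      = [seq (((g * q.1) * g)%g, act (g * q.1)%g (rmul (act (g * q.1)^-1%g (F q).2) x)) | q <- y].
    by rewrite /= cats0; elim: y {Heq ywf} => //= q y ->.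
  rewrite big_map /=.
  have Hq : forall q : G * A, ((g * q.1 * g)%g == g) = (q.1 == (g^-1)%g).
    move=> q; apply/eqP/eqP => [E|->]; last by rewrite mulgV mul1g.
    by apply: (mulgI g); rewrite mulgV; apply: (mulIg g); rewrite mul1g.
  under eq_bigl => q do rewrite Hq.
  set ys := \sum_(q <- y | q.1 == g^-1%g) act g q.2.
  have Hy : forall q, q \in y -> q.2 \in dom q.1 by move=> q qy; exact: (allP ywf q qy).
  have -> : \sum_(q <- y | q.1 == g^-1%g)
     act (g * q.1)%g
       (rmul (act (g * q.1)^-1%g (act g (rmul (act g^-1%g x) q.2))) x)
     = rmul (rmul x ys) x.
    rewrite /ys (big_morph (rmul x) (fun a b => rmulDr x a b) (rmul0r x)).
    rewrite (big_morph (fun s => rmul s x) (fun a b => rmulDl a b x) (rmul0l x)).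
    rewrite big_seq_cond [RHS]big_seq_cond; apply: eq_bigr => q /andP[qy /eqP q1].
    have q2d := Hy q qy; rewrite q1 in q2d.
    rewrite q1 mulgV invg1 !(pa_act1 Hpa) (pa_mul Hpa) ?(act_inv Hpa) //.
    exact: (act_inv_dom Hpa).
  move=> E; exists ys => //.
  rewrite /ys big_seq_cond; apply: (big_ind (fun a => a \in dom g)).
  + by case: (pa_ideal Hpa g).
  + by move=> a b; apply: ideal_add; apply: (pa_ideal Hpa).
  + move=> q /andP[qy /eqP q1]; apply: (pa_maps Hpa); rewrite -q1; exact: Hy.
- move=> Hv g a ad; have [b bd Eb] := Hv g a ad.
  exists (skew_hom (g^-1)%g (act (g^-1)%g b)).
    by rewrite /skew_wf /= andbT; exact: (act_inv_dom Hpa).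
  move=> h; rewrite /skew_mul /skew_hom /= mulgV mul1g invg1 !(pa_act1 Hpa).
  rewrite (pa_mul Hpa) ?(act_inv Hpa) ?Eb //; exact: (act_inv_dom Hpa).
Qed.
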